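(* Let $X$ be a Hausdorff topological space. Then $X$ is totally disconnected and locally compact if and only if its symmetric pseudogroup $\mathscr{I}(X)$ is algebraic.
   Context: The symmetric pseudogroup $\mathscr{I}(X)$ is the set of all homeomorphisms $f:U\to V$ between open subsets $U=\mathrm{dom}(f)$ and $V$ of $X$, with product: for $f:U\to V$ and $f_1:U_1\to V_1$, $f_1\cdot f : x\mapsto f_1(f(x))$ defined on $f^{-1}(V\cap U_1)$ with values in $f_1(V\cap U_1)$; it is an inverse semigroup with $f^*=f^{-1}$. Its intrinsic order is $f\leqslant g$ iff $f=g|_U$ for some open $U\subseteq\mathrm{dom}(g)$. In a poset, $x$ is way-below $y$ ($x\ll y$) if for every directed subset $D$ (nonempty, any two elements having an upper bound in $D$) that has a supremum with $y\leqslant\sup D$, there is $d\in D$ with $x\leqslant d$. An element $k$ is compact if $k\ll k$; a poset is algebraic if every element is the supremum of the directed set of compact elements below it; $\mathscr{I}(X)$ is algebraic if it is so for its intrinsic order. *)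

(* Defs.v *)
From HB Require Import structures.
From mathcomp Require Import all_boot all_order all_algebra.
From mathcomp Require Import all_classical all_reals all_analysis.
Set Implicit Arguments. Unset Strict Implicit. Unset Printing Implicit Defensive.
Local Open Scope classical_set_scope.

Definition directed {T : Type} (le : T -> T -> Prop) (D : set T) : Prop :=
  (exists d, D d) /\
  (forall a b, D a -> D b -> exists2 c, D c & le a c /\ le b c).

Definition is_sup {T : Type} (le : T -> T -> Prop) (D : set T) (s : T) : Prop :=
  (forall d, D d -> le d s) /\
  (forall u, (forall d, D d -> le d u) -> le s u).

Definition way_below {T : Type} (le : T -> T -> Prop) (x y : T) : Prop :=
  forall (D : set T) (s : T), directed le D -> is_sup le D s -> le y s ->
    exists2 d, D d & le x d.

Definition compact_elt {T : Type} (le : T -> T -> Prop) (k : T) : Prop :=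
  way_below le k k.

Definition algebraic {T : Type} (le : T -> T -> Prop) : Prop :=
  forall x : T,
    directed le [set k | compact_elt le k /\ le k x] /\
    is_sup le [set k | compact_elt le k /\ le k x] x.

(* partial maps X -> X are represented as X -> option X *)
Definition pdom {X : Type} (f : X -> option X) : set X :=
  [set x | exists y, f x = Some y].

Definition ptotal {X : Type} (f : X -> option X) : X -> X :=
  fun x => odflt x (f x).

Definition partial_homeo {X : topologicalType} (f : X -> option X) : Prop :=
  exists g : X -> option X,
    [/\ forall x y, f x = Some y <-> g y = Some x,
        open (pdom f), open (pdom g),
        {within pdom f, continuous (ptotal f)} &
        {within pdom g, continuous (ptotal g)}].

Definition sym_pseudogroup (X : topologicalType) : Type :=
  {f : X -> option X | partial_homeo f}.

Definition intrinsic_le {X : topologicalType} (f g : sym_pseudogroup X) : Prop :=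
  pdom (proj1_sig f) `<=` pdom (proj1_sig g) /\
  forall x, pdom (proj1_sig f) x -> proj1_sig f x = proj1_sig g x.

(* Main.v *)
Require Import Defs.
From mathcomp Require Import all_boot all_order all_algebra.
From mathcomp Require Import all_classical all_reals all_analysis.
Local Open Scope classical_set_scope.

Section Top.
Variable X : topologicalType.

Lemma dcover (K : set X) (I : Type) (P : set I) (O : I -> set X) :
  compact K -> (exists i, P i) ->
  (forall i j, P i -> P j -> exists2 k, P k & O i `|` O j `<=` O k) ->
  (forall i, P i -> open (O i)) -> K `<=` \bigcup_(i in P) O i ->
  exists2 i, P i & K `<=` O i.
Proof.
move=> cK Pne Pdir Oop KO.
apply: contrapT => Hno.
have Hne : forall i, P i -> (K `&` ~` O i) !=set0.
  move=> i Pi; apply: contrapT => H; apply: Hno; exists i => // x Kx.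
  apply: contrapT => nO; apply: H; by exists x.
pose F := filter_from P (fun i => K `&` ~` O i).
have FF : Filter F.
  apply: filter_from_filter => // i j Pi Pj.
  have [k Pk Hk] := Pdir i j Pi Pj; exists k => // x [Kx nOk].
  by split; split => // Ox; apply: nOk; apply: Hk; [left|right].
have PF : ProperFilter F by apply: filter_from_proper.
have [i0 Pi0] := Pne.
have FK : F K by exists i0 => // x [].
have [z [Kz clz]] := cK F PF FK.
have [i Pi Oiz] := KO z Kz.
have FO : F (K `&` ~` O i) by exists i.
have nbO : nbhs z (O i) by apply: open_nbhs_nbhs; split => //; exact: Oop.
have [w [[_ nOw] Ow]] := clz _ _ FO nbO.
by apply: nOw.
Qed.

End Top.


Section Top2.
Variable X : topologicalType.
Hypothesis hX : hausdorff_space X.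

Lemma sep_pt (P : set X) (y : X) : compact P -> ~ P y ->
  exists U V : set X, [/\ open U, open V, P `<=` U, V y &
    forall z, U z -> V z -> False].
Proof.
move=> cP nPy.
pose Q := fun UV : set X * set X => [/\ open UV.1, open UV.2, UV.2 y &
    forall z, UV.1 z -> UV.2 z -> False].
have [[U V] [oU oV Vy dUV] PU] : exists2 i, Q i & P `<=` i.1.
  apply: (@dcover X P _ Q (fun i => i.1) cP).
  - by exists (set0, setT); split => //=; [exact: open0|exact: openT].
  - move=> [U1 V1] [U2 V2] [/= oU1 oV1 V1y d1] [/= oU2 oV2 V2y d2].
    exists (U1 `|` U2, V1 `&` V2); last by [].
    split => /=; [exact: openU|exact: openI|by []|].
    by move=> z [u|u] [v1 v2]; [exact: (d1 z)|exact: (d2 z)].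
  - by move=> [U V] [].
  - move=> p Pp; have npy : p != y by apply/eqP => E; apply: nPy; rewrite -E.
    move: hX; rewrite open_hausdorff => /(_ p y npy) [[A B] /= [pA yB]].
    move=> [oA oB /eqP AB]; exists (A, B) => /=; last by rewrite -inE.
    split => //=; first by rewrite -inE.
    move=> z Az Bz; have : (A `&` B) z by [].
    by rewrite AB.
by exists U, V.
Qed.

Lemma sep_cpt (P R : set X) : compact P -> compact R ->
  (forall z, P z -> R z -> False) ->
  exists U V : set X, [/\ open U, open V, P `<=` U, R `<=` V &
    forall z, U z -> V z -> False].
Proof.
move=> cP cR dPR.
pose Q := fun UV : set X * set X => [/\ open UV.1, open UV.2, P `<=` UV.1 &
    forall z, UV.1 z -> UV.2 z -> False].
have [[U V] [oU oV PU dUV] RV] : exists2 i, Q i & R `<=` i.2.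
  apply: (@dcover X R _ Q (fun i => i.2) cR).
  - by exists (setT, set0); split => //=; [exact: openT|exact: open0].
  - move=> [U1 V1] [U2 V2] [/= oU1 oV1 P1 d1] [/= oU2 oV2 P2 d2].
    exists (U1 `&` U2, V1 `|` V2); last by [].
    split => /=; [exact: openI|exact: openU|by move=> z Pz; split; auto|].
    by move=> z [u1 u2] [v|v]; [exact: (d1 z)|exact: (d2 z)].
  - by move=> [U V] [].
  - move=> r Rr; have [U [V [oU oV PU Vr dUV]]] := @sep_pt P r cP (fun Pr => dPR r Pr Rr).
    by exists (U, V).
by exists U, V.
Qed.

End Top2.


Section Top3.
Variable X : topologicalType.

Lemma lc_nbhs (x : X) : locally_compact [set: X] ->
  exists K : set X, nbhs x K /\ compact K.
Proof.
move=> /(_ x I) [U hU [cU clU]].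
exists U; split => //.
have hU' : nbhs x [set y | [set: X] y -> U y] := hU.
by apply: filterS hU' => y; apply.
Qed.

Lemma famL (K : set X) (C : set (set X)) (O : set X) :
  compact K -> (exists C0, C C0) ->
  (forall A, C A -> closed A /\ A `<=` K) ->
  (forall A B, C A -> C B -> C (A `&` B)) ->
  open O -> (forall z, K z -> (forall A, C A -> A z) -> O z) ->
  exists2 A, C A & A `<=` O.
Proof.
move=> cK [C0 CC0] Ccl CI oO HO.
have [A CA KA] : exists2 A, C A & K `<=` O `|` ~` A.
  apply: (@dcover X K _ C (fun A => O `|` ~` A) cK).
  - by exists C0.
  - move=> A B CA CB; exists (A `&` B); first exact: CI.
    move=> z [[Oz|nAz]|[Oz|nBz]]; [by left|by right => -[]|by left|by right => -[]].
  - move=> A CA; apply: openU => //; apply: closed_openC; exact: (Ccl A CA).1.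
  - move=> z Kz; have [Oz|nOz] := pselect (O z).
      by exists C0 => //; left.
    have [A CA nAz] : exists2 A, C A & ~ A z.
      apply: contrapT => H; apply: nOz; apply: HO => // A CA.
      by apply: contrapT => nAz; apply: H; exists A.
    by exists A => //; right.
exists A => // z Az; have [] := KA z ((Ccl A CA).2 z Az) => // /(_ Az) [].
Qed.

Hypothesis hX : hausdorff_space X.

Lemma tdlc_basis : totally_disconnected [set: X] -> locally_compact [set: X] ->
  forall (x : X) (W : set X), open W -> W x ->
  exists C : set X, [/\ compact C, open C, C x & C `<=` W].
Proof.
move=> td lc x W oW Wx.
have [K [nK cK]] := lc_nbhs x lc.
have clK : closed K by exact: compact_closed.
pose CC := [set C : set X | [/\ C x, C `<=` K, closed C & closed (K `&` ~` C)]].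
have CCK : CC K.
  split => //; first exact: nbhs_singleton.
  by rewrite setICr; exact: closed0.
have Ccl : forall A, CC A -> closed A /\ A `<=` K by move=> A [].
have CI : forall A B, CC A -> CC B -> CC (A `&` B).
  move=> A B [Ax AK cA cKA] [Bx BK cB cKB]; split => //.
  - by move=> z [/AK].
  - exact: closedI.
  - by rewrite setCI setIUr; exact: closedU.
pose Q := \bigcap_(C in CC) C.
have Qx : Q x by move=> C [].
have QK : Q `<=` K by move=> z Qz; exact: Qz.
have clQ : closed Q by apply: closed_bigI => C [].
have splitQ : forall P R : set X, closed P -> closed R -> P `<=` Q -> R `<=` Q ->
    (forall z, P z -> R z -> False) -> (forall z, Q z -> P z \/ R z) -> P x ->
    forall z, ~ R z.
  move=> P R clP clR PQ RQ dPR cov Px z Rz.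
  have cP : compact P.
    by apply: (subclosed_compact clP cK); apply: subset_trans PQ QK.
  have cR : compact R.
    by apply: (subclosed_compact clR cK); apply: subset_trans RQ QK.
  have [U [V [oU oV PU RV dUV]]] := @sep_cpt X hX P R cP cR dPR.
  have [C CC_C CUV] := @famL K CC (U `|` V) cK (ex_intro _ K CCK) Ccl CI
     (openU oU oV) (fun z _ Hz => match cov z Hz with
                                  | or_introl p => or_introl (PU z p)
                                  | or_intror r => or_intror (RV z r) end).
  case: CC_C => Cx CK clC clKC.
  have CC' : CC (C `&` U).
    split.
    - by split => //; apply: PU.
    - by move=> w [/CK].
    - have -> : C `&` U = C `&` ~` V.
        apply/seteqP; split => w [Cw H]; split => //.
          by move=> Vw; exact: (dUV w).
        by have [//|//] := CUV w Cw.
      by apply: closedI => //; exact: open_closedC.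
    - have -> : K `&` ~` (C `&` U) = (K `&` ~` C) `|` (C `&` ~` U).
        apply/seteqP; split => w.
          move=> [Kw nCU]; have [Cw|nCw] := pselect (C w).
            by right; split => // Uw; apply: nCU.
          by left.
        move=> [[Kw nCw]|[Cw nUw]]; split => //; first by move=> [].
          exact: CK.
        by move=> [].
      by apply: closedU => //; apply: closedI => //; exact: open_closedC.
  have [_ Uz] : (C `&` U) z by apply: (RQ z Rz).
  exact: (dUV z Uz (RV z Rz)).
have connQ : connected Q.
  move=> B [b Bb] [Oo oOo BO] [Fc clFc BF].
  have clB : closed B by rewrite BF; exact: closedI.
  have clB' : closed (Q `&` ~` Oo) by apply: closedI => //; exact: open_closedC.
  have [Bx|nBx] := pselect (B x).
    have H := @splitQ B (Q `&` ~` Oo) clB clB'.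
    apply/seteqP; split; first by rewrite BO => w [].
    move=> w Qw; apply: contrapT => nBw.
    apply: (H _ _ _ _ Bx w).
    - by rewrite BO => v [].
    - by move=> v [].
    - by rewrite BO => v [_ Ov] [_ nOv].
    - move=> v Qv; have [Ov|nOv] := pselect (Oo v); [left|right] => //.
      by rewrite BO.
    - split => // Ow; apply: nBw; by rewrite BO.
  have H := @splitQ (Q `&` ~` Oo) B clB' clB.
  exfalso; apply: (H _ _ _ _ _ b Bb).
  - by move=> v [].
  - by rewrite BO => v [].
  - by rewrite BO => v [_ nOv] [_ Ov].
  - move=> v Qv; have [Ov|nOv] := pselect (Oo v); [right|left] => //.
    by rewrite BO.
  - split => // Ox; apply: nBx; by rewrite BO.
have Qsub : forall z, Q z -> z = x.
  move=> z Qz.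
  have : connected_component [set: X] x z.
    by apply: (connected_component_max Qx) => //.
  by rewrite td.
have [C [Cx CK clC clKC] CO] := @famL K CC (W `&` K°) cK (ex_intro _ K CCK) Ccl CI
     (openI oW (@open_interior X K))
     (fun z _ Hz => match esym (Qsub z Hz) in _ = w return (W `&` K°) w with
                    | erefl => conj Wx nK end).
exists C; split => //.
- exact: (subclosed_compact clC cK).
- have -> : C = K° `&` ~` (K `&` ~` C).
    apply/seteqP; split => w.
      by move=> Cw; split; [exact: (CO w Cw).2|move=> [_]].
    move=> [Kiw H]; apply: contrapT => nCw; apply: H; split => //.
    exact: interior_subset.
  by apply: openI; [exact: open_interior|exact: closed_openC].
- by move=> w /CO [].
Qed.

End Top3.

Set Implicit Arguments.

Section PG.
Variable X : topologicalType.

Lemma within_eq (A B : set X) (f h : X -> X) : A `<=` B -> {in A, f =1 h} ->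
  {within B, continuous f} -> {within A, continuous h}.
Proof.
move=> AB feq c.
apply: (@subspace_eq_continuous _ A _ (from_subspace A f)) => //.
exact: continuous_subspaceW c.
Qed.

Definition restr_fun (f : X -> option X) (U : set X) : X -> option X :=
  fun x => if pselect (U x) then f x else None.

Lemma selT (A : Type) (P : Prop) (a b : A) : P -> (if pselect P then a else b) = a.
Proof. by move=> p; case: (pselect P). Qed.
Lemma selF (A : Type) (P : Prop) (a b : A) : ~ P -> (if pselect P then a else b) = b.
Proof. by move=> p; case: (pselect P). Qed.

Lemma pdom_restr f U : pdom (restr_fun f U) = pdom f `&` U.
Proof.
apply/seteqP; split => x; rewrite /pdom /restr_fun /=.
  have [Ux|nUx] := pselect (U x).
    by rewrite selT // => -[y H]; split => //; exists y.
  by rewrite selF // => -[y].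
by move=> [[y H] Ux]; exists y; rewrite selT.
Qed.

Lemma restr_homeo f U : partial_homeo f -> open U -> partial_homeo (restr_fun f U).
Proof.
move=> [g [fg of_ og cf cg]] oU.
pose g' := fun y => match g y with
  | Some x => if pselect (U x) then Some x else None | None => None end.
have dg' : pdom g' = pdom g `&` (ptotal g @^-1` U).
  apply/seteqP; split => y; rewrite /pdom /g' /ptotal /=.
    case E: (g y) => [x|] [z]; last by [].
    have [Ux|nUx] := pselect (U x); last by rewrite selF.
    by move=> _; split; [exists x|].
  by move=> [[x E]]; rewrite E /= => Ux; exists x; rewrite selT.
exists g'; split.
- move=> x y; rewrite /restr_fun /g'; split.
    have [Ux|nUx] := pselect (U x); last by rewrite selF.
    by rewrite selT // => /fg ->; rewrite selT.
  case E: (g y) => [z|] //.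
  have [Uz|nUz] := pselect (U z); last by rewrite selF.
  rewrite selT // => -[<-]; rewrite selT //; exact/fg.
- by rewrite pdom_restr; exact: openI.
- rewrite dg'; have cg' : {in pdom g, continuous (ptotal g)}.
    by rewrite -continuous_open_subspace.
  have := (continuous_inP _ og).1 cg' U oU. by [].
- apply: (@within_eq _ (pdom f) (ptotal f)).
  + by rewrite pdom_restr => x [].
  + move=> x; rewrite inE pdom_restr => -[_ Ux].
    by rewrite /ptotal /restr_fun selT.
  + exact: cf.
- apply: (@within_eq _ (pdom g) (ptotal g)).
  + by rewrite dg' => x [].
  + move=> y; rewrite inE dg' /ptotal /g' => -[_ Uy].
    move: Uy; rewrite /ptotal /preimage /=.
    case: (g y) => [x|] //= Ux; rewrite selT //.
  + exact: cg.
Qed.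


Local Notation I := (sym_pseudogroup X).
Local Notation le := (@intrinsic_le X).
Local Notation dom f := (pdom (proj1_sig f)).

Definition restr (f : I) (U : set X) (hU : open U) : I :=
  exist _ (restr_fun (proj1_sig f) U) (restr_homeo U (proj2_sig f) hU).
Arguments restr f {U} hU.

Lemma dom_restr (f : I) U (hU : open U) : dom (restr f hU) = dom f `&` U.
Proof. exact: pdom_restr. Qed.

Lemma dom_open (f : I) : open (dom f).
Proof. by have [g [_ ? _ _ _]] := proj2_sig f. Qed.

Lemma le_refl (f : I) : le f f.
Proof. by split. Qed.

Lemma restr_le (f : I) U (hU : open U) : le (restr f hU) f.
Proof.
split; first by rewrite dom_restr => x [].
move=> x; rewrite dom_restr => -[_ Ux] /=.
by rewrite /restr_fun selT.
Qed.

Lemma le_restr (f g : I) U (hU : open U) : le g f -> dom g `<=` U ->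
  le g (restr f hU).
Proof.
move=> [gf eq] gU; split.
  by rewrite dom_restr => x gx; split; [exact: gf|exact: gU].
move=> x gx /=; rewrite /restr_fun selT; [exact: eq|exact: gU].
Qed.

Lemma sup_cover (x : I) (S : set I) :
  (forall k, S k -> le k x) ->
  (forall y, dom x y -> exists2 k, S k & dom k y) -> is_sup le S x.
Proof.
move=> Sx cov; split => // u ub; split.
  by move=> y /cov [k Sk ky]; exact: (ub k Sk).1.
move=> y xy; have [k Sk ky] := cov y xy.
by rewrite -(Sx k Sk).2 // (ub k Sk).2.
Qed.

Definition idfun_homeo : partial_homeo (fun x : X => Some x).
Proof.
exists (fun x : X => Some x); split.
- by move=> x y; split => -[->].
- have -> : pdom (fun x : X => Some x) = setT.
    by apply/seteqP; split => // x _; exists x.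
  exact: openT.
- have -> : pdom (fun x : X => Some x) = setT.
    by apply/seteqP; split => // x _; exists x.
  exact: openT.
- by apply: continuous_subspaceT => x; exact: cvg_id.
- by apply: continuous_subspaceT => x; exact: cvg_id.
Qed.

Definition idI : I := exist _ (fun x : X => Some x) idfun_homeo.

Lemma dom_idI : dom idI = setT.
Proof. by apply/seteqP; split => // x _; exists x. Qed.

End PG.
Arguments restr {X} f {U} hU.
Arguments restr_le {X} f {U} hU.
Arguments dom_restr {X} f {U} hU.
Arguments idI {X}.
Arguments dom_idI {X}.

Set Implicit Arguments.

Section Main.
Variable X : topologicalType.
Hypothesis hX : hausdorff_space X.
Local Notation I := (sym_pseudogroup X).
Local Notation le := (@intrinsic_le X).
Local Notation dom f := (pdom (proj1_sig f)).

Lemma open_compl1 (y : X) : open (~` [set y]).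
Proof. exact/closed_openC/accessible_closed_set1/hausdorff_accessible. Qed.

Lemma basis_tdlc :
  (forall (x : X) (W : set X), open W -> W x ->
    exists C : set X, [/\ compact C, open C, C x & C `<=` W]) ->
  totally_disconnected [set: X] /\ locally_compact [set: X].
Proof.
move=> B; split.
  apply: zero_dimension_totally_disconnected => x y xy.
  have [C [cC oC Cx CW]] := B x _ (open_compl1 y) (fun E => (negP xy) (introT eqP E)).
  exists C; split => //; first by split => //; exact: compact_closed.
  by move=> Cy; exact: (CW y Cy).
move=> x _; have [C [cC oC Cx _]] := B x setT openT Logic.I.
exists C; last by split => //; exact: compact_closed.
have : nbhs x C by apply: open_nbhs_nbhs.
by apply: filterS => y Cy _.
Qed.

Lemma dom_cpt_compact (k : I) : compact (dom k) -> compact_elt le k.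
Proof.
move=> ck D s [[d0 Dd0] Ddir] [ub lub] ks.
have cov : dom s `<=` \bigcup_(d in D) dom d.
  move=> y sy; apply: contrapT => H.
  pose r := restr s (open_compl1 y).
  have : le s r.
    apply: lub => d Dd; apply: le_restr (ub d Dd) _.
    by move=> z dz Ezy; apply: H; exists d => //; rewrite -Ezy.
  move=> [/(_ y sy)]; rewrite dom_restr => -[_ nyy] _; exact: nyy.
have [d Dd kd] : exists2 d, D d & dom k `<=` dom d.
  apply: (@dcover X (dom k) I D (fun d => dom d) ck (ex_intro _ d0 Dd0)).
  - move=> a b Da Db; have [c Dc [ac bc]] := Ddir a b Da Db.
    by exists c => // z [az|bz]; [exact: ac.1|exact: bc.1].
  - by move=> d _; exact: dom_open.
  - exact: (subset_trans ks.1 cov).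
exists d => //; split => // z kz.
rewrite (ks.2 z kz) -(ub d Dd).2 //; exact: kd.
Qed.

Lemma compact_dom (k : I) : compact_elt le k -> compact (dom k).
Proof.
move=> kc F PF Fk; apply: contrapT => nc.
have Hy : forall y, dom k y -> exists V, [/\ open V, V y &
    exists2 S, F S & forall z, V z -> S z -> False].
  move=> y ky; apply: contrapT => H; apply: nc; exists y; split => //.
  move=> A Bn FA nB; apply: contrapT => AB0.
  move: nB; rewrite nbhsE => -[V [oV Vy] VB]; apply: H; exists V; split => //.
  by exists A => // z Vz Az; apply: AB0; exists z; split => //; exact: VB.
pose Dd := [set r : I | exists V (hV : open V), r = restr k hV /\
   exists2 S, F S & forall z, V z -> S z -> False].
have dir : directed le Dd.
  split.
    exists (restr k open0); exists set0, open0; split => //.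
    by exists setT => //; exact: filterT.
  move=> a b [V1 [hV1 [-> [S1 FS1 d1]]]] [V2 [hV2 [-> [S2 FS2 d2]]]].
  exists (restr k (openU hV1 hV2)).
    exists (V1 `|` V2), (openU hV1 hV2); split => //.
    exists (S1 `&` S2); first exact: filterI.
    by move=> z [Vz|Vz] [S1z S2z]; [exact: (d1 z)|exact: (d2 z)].
  split; apply: le_restr; try exact: restr_le.
    by rewrite dom_restr => z [_ ?]; left.
  by rewrite dom_restr => z [_ ?]; right.
have sup : is_sup le Dd k.
  apply: sup_cover.
    by move=> r [V [hV [-> _]]]; exact: restr_le.
  move=> y ky; have [V [oV Vy [S FS dVS]]] := Hy y ky.
  exists (restr k oV); first by exists V, oV; split => //; exists S.
  by rewrite dom_restr.
have [d [V [hV [-> [S FS dVS]]]] kd] := kc Dd k dir sup (le_refl k).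
have [z [kz Sz]] := filter_ex (filterI Fk FS).
apply: (dVS z) => //.
by have := kd.1 z kz; rewrite dom_restr => -[].
Qed.

Theorem main_thm :
  ((totally_disconnected [set: X] /\ locally_compact [set: X]) <->
   algebraic (@intrinsic_le X)).
Proof.
split.
  move=> [td lc] x; have basis := @tdlc_basis X hX td lc.
  split.
    split.
      exists (restr x open0); split; last exact: restr_le.
      apply: dom_cpt_compact; rewrite dom_restr setI0; exact: compact0.
    move=> a b [ca ax] [cb bx].
    have oab := openU (dom_open a) (dom_open b).
    exists (restr x oab).
      split; last exact: restr_le.
      apply: dom_cpt_compact.
      have -> : dom (restr x oab) = dom a `|` dom b.
        rewrite dom_restr; apply/seteqP; split => z; first by move=> [].
        move=> H; split => //; case: H => H; [exact: ax.1|exact: bx.1].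
      exact: compactU (compact_dom ca) (compact_dom cb).
    by split; apply: le_restr => //; move=> z ?; first [by left|by right].
  apply: sup_cover; first by move=> k [].
  move=> y xy; have [C [cC oC Cy Cx]] := basis y _ (dom_open x) xy.
  exists (restr x oC).
    split; last exact: restr_le.
    apply: dom_cpt_compact; rewrite dom_restr.
    have -> : dom x `&` C = C by apply/seteqP; split => z; [move=> []|move=> Cz; split => //; exact: Cx].
    exact: cC.
  by rewrite dom_restr.
move=> alg; apply: basis_tdlc => x W oW Wx.
pose w := restr idI oW.
have [_ [ub lub]] := alg w.
have [k [ck kw] kx] : exists2 k, (compact_elt le k /\ le k w) & dom k x.
  apply: contrapT => H.
  pose r := restr w (open_compl1 x).
  have : le w r.
    apply: lub => k [ck kw]; apply: le_restr; first exact: kw.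
    move=> z kz Ezx; apply: H; exists k; first by split.
    by move: kz; rewrite Ezx.
  move=> [sub _]; have := sub x.
  rewrite !dom_restr dom_idI.
  by move=> /(_ (conj Logic.I Wx)) [_ /(_ erefl)].
exists (dom k); split => //.
- exact: compact_dom.
- exact: dom_open.
- by move=> z /(kw.1 z); rewrite dom_restr => -[].
Qed.

End Main.

Unset Implicit Arguments.

Theorem corollary5p12 (X : topologicalType) :
  hausdorff_space X ->
  ((totally_disconnected [set: X] /\ locally_compact [set: X]) <->
   algebraic (@intrinsic_le X)).
Proof.
move=> hX; exact: (@main_thm X hX).
Qed.
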